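(* Let $L=8$ and let $B=2^s\ge 8$. Let $\alpha_0,\dots,\alpha_{B-1}$ be nonzero real LLRs of one list path at a rate-1 constituent block, indexed so that $|\alpha_0|<|\alpha_1|<\cdots<|\alpha_{B-1}|$, and let $\beta=(\beta_0,\dots,\beta_{B-1})\in\{0,1\}^B$ with $\beta_j=\frac{1-\mathrm{sgn}(\alpha_j)}{2}$. For a candidate sub-path $\hat\beta\in\{0,1\}^B$ define its incremental path metric $\Delta(\hat\beta)=\sum_{j=0}^{B-1}|\hat\beta_j-\beta_j|\,|\alpha_j|$. Let $\mathcal C\subseteq\{0,1\}^B$ be the following set of 13 vectors: $\beta$; $\beta\oplus e_p$ for $p=0,1,\dots,6$; $\beta\oplus e_0\oplus e_1$; $\beta\oplus e_0\oplus e_2$; $\beta\oplus e_1\oplus e_2$; $\beta\oplus e_0\oplus e_3$; $\beta\oplus e_0\oplus e_1\oplus e_2$. Then the $L=8$ maximum-likelihood sub-paths of this path (the 8 vectors of $\{0,1\}^B$ with the smallest incremental path metrics $\Delta$) fall into $\mathcal C$; that is, there is a set $S\subseteq\mathcal C$ with $|S|=8$ such that $\Delta(v)\le\Delta(w)$ for all $v\in S$ and all $w\in\{0,1\}^B\setminus S$. Consequently, in one-time path extension of all 8 list paths followed by pruning to the 8 paths of smallest path metric, restricting each path's extensions to these 13 error patterns incurs no loss.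
   Context: Setting: successive-cancellation list (SCL) decoding of a polar code with list size $L$. At a constituent block of length $B$ (a rate-1 node, i.e., all $B$ positions carry information, so every vector in $\{0,1\}^B$ is a valid codeword of the block), each list path $l$ has a path metric $\mathrm{PM}^l$ and soft inputs $\alpha_j$. A sub-path extending path $l$ is a choice of block output $\hat\beta\in\{0,1\}^B$; its new path metric is $\mathrm{PM}^l+\Delta(\hat\beta)$. After extension, the $L$ extended paths (over all parent paths) with the smallest path metrics survive. $e_p\in\{0,1\}^B$ denotes the vector with a $1$ in position $p$ (positions indexed $0,\dots,B-1$ in the sorted order above) and $0$ elsewhere; $\oplus$ is componentwise XOR. *)

(* Defs.v *)
From mathcomp Require Import all_boot all_order all_algebra.
Set Implicit Arguments. Unset Strict Implicit. Unset Printing Implicit Defensive.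
Import Order.TTheory GRing.Theory Num.Theory.
Local Open Scope ring_scope.

Notation bvec B := {ffun 'I_B -> bool}.

(* Hard decision: beta_j = (1 - sgn alpha_j)/2, i.e. 1 iff alpha_j < 0. *)
Definition hard_dec (R : realFieldType) (B : nat) (alpha : 'I_B -> R) : bvec B :=
  [ffun j => alpha j < 0].

Definition Delta (R : realFieldType) (B : nat) (alpha : 'I_B -> R) (hb : bvec B) : R :=
  \sum_(j < B) `|(nat_of_bool (hb j))%:R - (nat_of_bool (hard_dec alpha j))%:R| * `|alpha j|.

Definition flip (B : nat) (v : bvec B) (p : nat) : bvec B :=
  [ffun j => xorb (v j) (nat_of_ord j == p)].

Definition cand_set (B : nat) (beta : bvec B) : {set bvec B} :=
  [set beta;
       flip beta 0; flip beta 1; flip beta 2; flip beta 3;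
       flip beta 4; flip beta 5; flip beta 6;
       flip (flip beta 0) 1; flip (flip beta 0) 2; flip (flip beta 1) 2;
       flip (flip beta 0) 3; flip (flip (flip beta 0) 1) 2].

(* Main.v *)
Require Import Defs.
From mathcomp Require Import all_boot all_order all_algebra.
From mathcomp Require Import lra zify.
Import Order.TTheory GRing.Theory Num.Theory.
Local Open Scope ring_scope.

Lemma select_k (R : realFieldType) (T : finType) (f : T -> R) (C : {set T}) (k : nat) :
  (k <= #|C|)%N -> exists S : {set T}, [/\ S \subset C, #|S| = k &
     forall v w, v \in S -> w \in C -> w \notin S -> f v <= f w].
Proof.
elim: k => [|k IH] hk.
  by exists set0; split; rewrite ?sub0set ?cards0 // => v w; rewrite in_set0.
have [S [sSC cS hS]] := IH (ltnW hk).
have : S \proper C by rewrite properEcard sSC cS.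
move=> /properP [_ [x0 x0C x0S]].
have P0 : x0 \in C :\: S by rewrite inE x0S.
case: (@arg_minP _ R T x0 (mem (C :\: S)) f P0) => x /setDP [xC xS] hmin.
exists (x |: S); split.
- by rewrite subUset sub1set xC.
- by rewrite cardsU1 xS cS.
- move=> v w; rewrite !inE negb_or => /orP [/eqP-> | vS] wC /andP [wx wS].
  + by apply: hmin; apply/setDP; split.
  + by apply: hS.
Qed.
Definition pairs : seq (nat * nat) :=
  [:: (4,0);(4,1);(4,2);(4,3);(4,5);(4,6);
      (5,0);(5,1);(5,2);(5,3);(5,4);(5,6);
      (6,0);(6,1);(6,2);(6,3);(6,4);(6,5)].

Definition cl : seq (seq bool) :=
  [:: [:: false; false; false; false; false; false; false];
      [:: true; false; false; false; false; false; false];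
      [:: false; true; false; false; false; false; false];
      [:: false; false; true; false; false; false; false];
      [:: false; false; false; true; false; false; false];
      [:: false; false; false; false; true; false; false];
      [:: false; false; false; false; false; true; false];
      [:: false; false; false; false; false; false; true];
      [:: true; true; false; false; false; false; false];
      [:: true; false; true; false; false; false; false];
      [:: false; true; true; false; false; false; false];
      [:: true; false; false; true; false; false; false];
      [:: true; true; true; false; false; false; false]].

Lemma key (b0 b1 b2 b3 b4 b5 b6 : bool) :
  ~~ (b3 && (b1 || b2)) ==>
  (all (fun p => ~~ (nth false [:: b0; b1; b2; b3; b4; b5; b6] p.1 &&
                      nth false [:: b0; b1; b2; b3; b4; b5; b6] p.2)) pairs ==>
  ([:: b0; b1; b2; b3; b4; b5; b6] \in cl)).
Proof. by move: b0 b1 b2 b3 b4 b5 b6; do 7 case. Qed.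
Section Main.
Variables (R : realFieldType) (b : nat) (alpha : 'I_b.+1 -> R).
Hypothesis hB : (7 <= b)%N.
Hypothesis hnz : forall j, alpha j != 0.
Hypothesis hsort : forall i j : 'I_b.+1, (i < j)%N -> `|alpha i| < `|alpha j|.

Local Notation beta := (hard_dec alpha).
Definition a n := `|alpha (inord n)|.
Definition g (P : nat -> bool) : bvec b.+1 := [ffun j => xorb (beta j) (P j)].
Definition G l := g (nth false l).
Definition D (v : bvec b.+1) n := v (inord n) != beta (inord n).

Lemma a_pos n : 0 < a n.
Proof. by rewrite /a normr_gt0. Qed.

Lemma a_lt m n : (m < n)%N -> (n <= b)%N -> a m < a n.
Proof.
move=> hmn hn; apply: hsort; rewrite !inordK // ltnS //; exact: ltnW (leq_trans hmn hn).
Qed.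

Lemma a_le m n : (m <= n)%N -> (n <= b)%N -> a m <= a n.
Proof.
rewrite leq_eqVlt => /orP [/eqP-> //| hmn] hn; exact/ltW/a_lt.
Qed.

Lemma Delta_sum (v : bvec b.+1) : Delta alpha v = \sum_(j < b.+1) (v j != beta j)%:R * `|alpha j|.
Proof.
apply: eq_bigr => j _; congr (_ * _).
by case: (v j); case: (beta j); rewrite /= ?subrr ?normr0 ?subr0 ?sub0r ?normrN ?normr1.
Qed.

Lemma Delta_g P : Delta alpha (g P) = \sum_(j < b.+1) (P j)%:R * `|alpha j|.
Proof.
rewrite Delta_sum; apply: eq_bigr => j _; rewrite ffunE.
by case: (beta j); case: (P j).
Qed.

Lemma Delta_G l : (size l <= 7)%N ->
  Delta alpha (G l) = \sum_(0 <= n < 7) (nth false l n)%:R * a n.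
Proof.
move=> hl; rewrite Delta_g.
rewrite (eq_bigr (fun j : 'I_b.+1 => (nth false l j)%:R * a j)); last first.
  by move=> j _; rewrite /a inord_val.
rewrite -(big_mkord xpredT (fun n => (nth false l n)%:R * a n)).
rewrite (big_cat_nat _ (n := 7)) //=; last by apply: leq_trans hB _.
have -> : \sum_(7 <= n < b.+1) (nth false l n)%:R * a n = 0.
  rewrite big_nat_cond big1 // => n /andP [/andP [h7 _] _].
  by rewrite nth_default ?mul0r //; apply: leq_trans hl h7.
by rewrite addr0.
Qed.

Lemma D_g P n : (n <= b)%N -> D (g P) n = P n.
Proof. by move=> hn; rewrite /D ffunE inordK //; case: (beta _); case: (P n). Qed.

Lemma gD (v : bvec b.+1) : v = g (D v).
Proof.
apply/ffunP => j; rewrite ffunE /D inord_val.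
by case: (v j); case: (beta j).
Qed.

Lemma g_ext P Q : (forall n, (n <= b)%N -> P n = Q n) -> g P = g Q.
Proof. by move=> h; apply/ffunP => j; rewrite !ffunE h // -ltnS. Qed.

Lemma lb1 (v : bvec b.+1) j : v j != beta j -> `|alpha j| <= Delta alpha v.
Proof.
move=> hj; rewrite Delta_sum (bigD1 j) //= hj mul1r lerDl.
by apply: sumr_ge0 => i _; rewrite mulr_ge0.
Qed.

Lemma lb2 (v : bvec b.+1) j k : j != k -> v j != beta j -> v k != beta k ->
  `|alpha j| + `|alpha k| <= Delta alpha v.
Proof.
move=> hjk hj hk; rewrite Delta_sum (bigD1 j) //= hj mul1r lerD2l.
rewrite (bigD1 k) /=; last by rewrite eq_sym hjk.
rewrite hk mul1r lerDl.
by apply: sumr_ge0 => i _; rewrite mulr_ge0.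
Qed.


Definition Cset : {set bvec b.+1} := [set x in map G cl].

Ltac ceq := apply/ffunP => -[[|[|[|[|[|[|[|n]]]]]]] Hj]; rewrite !ffunE; case: (alpha _ < 0); try reflexivity; by rewrite nth_default.

Lemma cand_eq : cand_set beta = Cset.
Proof.
have e012 : flip (flip (flip beta 0) 1) 2 = G [:: true; true; true; false; false; false; false] by ceq.
have e01 : flip (flip beta 0) 1 = G [:: true; true; false; false; false; false; false] by ceq.
have e02 : flip (flip beta 0) 2 = G [:: true; false; true; false; false; false; false] by ceq.
have e12 : flip (flip beta 1) 2 = G [:: false; true; true; false; false; false; false] by ceq.
have e03 : flip (flip beta 0) 3 = G [:: true; false; false; true; false; false; false] by ceq.
have e0 : flip beta 0 = G [:: true; false; false; false; false; false; false] by ceq.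
have e1 : flip beta 1 = G [:: false; true; false; false; false; false; false] by ceq.
have e2 : flip beta 2 = G [:: false; false; true; false; false; false; false] by ceq.
have e3 : flip beta 3 = G [:: false; false; false; true; false; false; false] by ceq.
have e4 : flip beta 4 = G [:: false; false; false; false; true; false; false] by ceq.
have e5 : flip beta 5 = G [:: false; false; false; false; false; true; false] by ceq.
have e6 : flip beta 6 = G [:: false; false; false; false; false; false; true] by ceq.
have eb : beta = G [:: false; false; false; false; false; false; false] by ceq.
rewrite /cand_set e012 e01 e02 e12 e03 e0 e1 e2 e3 e4 e5 e6 eb.
by apply/setP => x; rewrite !inE /= -!orbA.
Qed.

Lemma G_inj : {in cl &, injective G}.
Proof.
move=> l1 l2 h1 h2 e.
have hs : all (fun l : seq bool => size l == 7%N) cl by [].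
have s1 : size l1 = 7%N by apply/eqP; exact: (allP hs).
have s2 : size l2 = 7%N by apply/eqP; exact: (allP hs).
apply: (@eq_from_nth _ false) => [|i hi]; first by rewrite s1 s2.
rewrite s1 in hi.
have hib : (i <= b)%N by apply: ltnW (leq_trans hi hB).
rewrite -(@D_g (nth false l1) i hib) -(@D_g (nth false l2) i hib).
by change (D (G l1) i = D (G l2) i); rewrite e.
Qed.

Lemma card_C : #|Cset| = 13%N.
Proof.
have u : uniq (map G cl) by rewrite (map_inj_in_uniq G_inj).
by rewrite cardsE (card_uniqP u) size_map.
Qed.

Lemma G_in l : l \in cl -> G l \in Cset.
Proof. by move=> hl; rewrite inE; apply: map_f. Qed.

Lemma count8 (ls : seq (seq bool)) t : all (mem cl) ls -> uniq ls -> size ls = 8%N ->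
  all (fun l => Delta alpha (G l) <= t) ls ->
  (8 <= #|[set c in Cset | (Delta alpha c <= t)%R]|)%N.
Proof.
move=> hs hu hsz hle.
have u : uniq (map G ls).
  rewrite (map_inj_in_uniq (f := G)) // => x y hx hy; apply: G_inj; exact: (allP hs).
rewrite -hsz -(size_map G) -(card_uniqP u); apply: subset_leq_card.
apply/subsetP => c /mapP [l hl ->]; rewrite inE; apply/andP; split.
  by apply: G_in; exact: (allP hs).
exact: (allP hle).
Qed.

Lemma Delta_G7 l : (size l <= 7)%N -> Delta alpha (G l) =
  (nth false l 0)%:R * a 0 + ((nth false l 1)%:R * a 1 + ((nth false l 2)%:R * a 2 +
  ((nth false l 3)%:R * a 3 + ((nth false l 4)%:R * a 4 + ((nth false l 5)%:R * a 5 +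
  ((nth false l 6)%:R * a 6 + 0)))))).
Proof. by move=> hl; rewrite Delta_G // /index_iota subn0 /= !big_cons big_nil. Qed.

Lemma chain : [/\ 0 < a 0, a 0 < a 1, a 1 < a 2, a 2 < a 3 & [/\ a 3 < a 4, a 4 < a 5 & a 5 < a 6]].
Proof.
have h : forall n, (n < 6)%N -> a n < a n.+1.
  by move=> n hn; apply: a_lt => //; apply: leq_trans _ hB; exact: ltnW hn.
by rewrite a_pos !h.
Qed.


Lemma lbn (w : bvec b.+1) n m : n != m -> (n <= b)%N -> (m <= b)%N -> D w n -> D w m ->
  a n + a m <= Delta alpha w.
Proof.
move=> hnm hn hm dn dm; apply: lb2 => //.
apply/eqP => /(congr1 val) /=; rewrite !inordK ?ltnS // => /eqP.
by rewrite (negbTE hnm).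
Qed.

Lemma nth7 (d : nat -> bool) n : (n < 7)%N ->
  nth false [:: d 0%N; d 1%N; d 2%N; d 3%N; d 4%N; d 5%N; d 6%N] n = d n.
Proof. by case: n => [|[|[|[|[|[|[|n]]]]]]]. Qed.

Ltac fin := rewrite /= !Delta_G7 //=;
  rewrite ?mulr1n ?mulr0n ?mul1r ?mul0r ?add0r ?addr0;
  repeat (apply/andP; split); lra.

Lemma lowerbound (w : bvec b.+1) : w \notin Cset ->
  (8 <= #|[set c in Cset | (Delta alpha c <= Delta alpha w)%R]|)%N.
Proof.
move=> wC.
have [h0 h01 h12 h23 [h34 h45 h56]] := chain.
have [hA|hA] := boolP [exists j : 'I_b.+1, (6 < j)%N && (w j != beta j)].
  case/existsP: hA => j /andP [hj hwj].
  have l1 := @lb1 w j hwj.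
  have l2 : a 6 < `|alpha j|.
    rewrite /a; apply: hsort; rewrite inordK // ltnS; exact: ltnW hB.
  apply: (@count8 ([:: [:: false; false; false; false; false; false; false];
      [:: true; false; false; false; false; false; false];
      [:: false; true; false; false; false; false; false];
      [:: false; false; true; false; false; false; false];
      [:: false; false; false; true; false; false; false];
      [:: false; false; false; false; true; false; false];
      [:: false; false; false; false; false; true; false];
      [:: false; false; false; false; false; false; true]])) => //.
  fin.
have h1b : (1 <= b)%N by apply: leq_trans hB.
have h2b : (2 <= b)%N by apply: leq_trans hB.
have h3b : (3 <= b)%N by apply: leq_trans hB.
have [hBB|hBB] := boolP (D w 3 && (D w 1 || D w 2)).
  have lb : a 1 + a 3 <= Delta alpha w.
    case/andP: hBB => d3 /orP [d1|d2].
      exact: lbn.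
    have := @lbn w 2 3 isT h2b h3b d2 d3; lra.
  apply: (@count8 ([:: [:: false; false; false; false; false; false; false];
      [:: true; false; false; false; false; false; false];
      [:: false; true; false; false; false; false; false];
      [:: false; false; true; false; false; false; false];
      [:: false; false; false; true; false; false; false];
      [:: true; true; false; false; false; false; false];
      [:: true; false; true; false; false; false; false];
      [:: false; true; true; false; false; false; false]])) => //.
  fin.
have [hC|hC] := boolP [exists n : 'I_7, exists m : 'I_7,
   [&& (3 < n)%N, (n != m :> nat), D w n & D w m]].
  have lb : a 0 + a 4 <= Delta alpha w.
    case/existsP: hC => n /existsP [m /and4P [hn hnm dn dm]].
    have hnb : (n <= b)%N by apply: leq_trans hB; exact: ltnW (ltn_ord n).
    have hmb : (m <= b)%N by apply: leq_trans hB; exact: ltnW (ltn_ord m).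
    have := @lbn w n m hnm hnb hmb dn dm.
    have := @a_le 4 n hn hnb.
    have := @a_le 0 m (leq0n m) hmb.
    lra.
  apply: (@count8 ([:: [:: false; false; false; false; false; false; false];
      [:: true; false; false; false; false; false; false];
      [:: false; true; false; false; false; false; false];
      [:: false; false; true; false; false; false; false];
      [:: false; false; false; true; false; false; false];
      [:: true; true; false; false; false; false; false];
      [:: true; false; true; false; false; false; false];
      [:: true; false; false; true; false; false; false]])) => //.
  fin.
exfalso; move/negP: wC; apply.
have -> : w = G [:: D w 0; D w 1; D w 2; D w 3; D w 4; D w 5; D w 6].
  rewrite {1}(gD w); apply: g_ext => n hn.
  case: (ltnP n 7) => h7; first by rewrite nth7.
  rewrite nth_default //; case dn: (D w n) => //; move/negP: hA; case.
  apply/existsP; exists (inord n); rewrite inordK ?ltnS // h7 /=.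
  exact: dn.
apply: G_in.
have hall : all (fun p => ~~ (nth false [:: D w 0; D w 1; D w 2; D w 3; D w 4; D w 5; D w 6] p.1 &&
                       nth false [:: D w 0; D w 1; D w 2; D w 3; D w 4; D w 5; D w 6] p.2)) pairs.
  apply/allP => -[n m] hp.
  have : all (fun p => [&& (p.1 < 7)%N, (p.2 < 7)%N, (3 < p.1)%N & p.1 != p.2]) pairs by [].
  move/allP/(_ _ hp) => /and4P [hn hm h3 hnm] /=.
  rewrite !nth7 //; apply/negP => /andP [dn dm]; move/negP: hC; apply.
  apply/existsP; exists (Ordinal hn); apply/existsP; exists (Ordinal hm).
  by rewrite /= h3 hnm dn dm.
by move: (key (D w 0) (D w 1) (D w 2) (D w 3) (D w 4) (D w 5) (D w 6)) => /implyP/(_ hBB)/implyP/(_ hall).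
Qed.

Lemma main_b : exists S : {set bvec b.+1}, [/\ S \subset cand_set beta, #|S| = 8%N &
  forall v w, v \in S -> w \notin S -> Delta alpha v <= Delta alpha w].
Proof.
rewrite cand_eq.
have hk : (8 <= #|Cset|)%N by rewrite card_C.
have [S [sSC cS hS]] := @select_k R _ (Delta alpha) Cset 8 hk.
exists S; split => // v w vS wS.
case wC: (w \in Cset); first exact: hS.
rewrite leNgt; apply/negP => hlt.
have := @lowerbound w (negbT wC).
have sub : [set c in Cset | (Delta alpha c <= Delta alpha w)%R] \subset S :\ v.
  apply/subsetP => c; rewrite inE => /andP [cC hc]; rewrite in_setD1.
  apply/andP; split.
    by apply/eqP => cv; move: hlt; rewrite -cv ltNge hc.
  apply/negPn/negP => cS'.
  have := hS v c vS cC cS'.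
  by move=> hvc; have := le_lt_trans hvc (le_lt_trans hc hlt); rewrite ltxx.
move/subset_leq_card: sub => h1 h2.
have hc := cardsD1 v S; rewrite vS cS in hc.
have h3 := leq_trans h2 h1; move: hc h3 => /eqP; rewrite add1n eqSS => /eqP <-. by [].
Qed.

End Main.

Theorem proposition1 (R : realFieldType) (s : nat) (hs : (3 <= s)%N)
    (alpha : 'I_(2 ^ s) -> R)
    (hnz : forall j, alpha j != 0)
    (hsort : forall i j : 'I_(2 ^ s), (i < j)%N -> `|alpha i| < `|alpha j|) :
  exists S : {set bvec (2 ^ s)},
    [/\ S \subset cand_set (hard_dec alpha), #|S| = 8%N &
        forall v w, v \in S -> w \notin S -> Delta alpha v <= Delta alpha w].
Proof.
have hB : (8 <= 2 ^ s)%N.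
  by apply: (@leq_trans (2 ^ 3)) => //; apply: leq_pexp2l.
move: alpha hnz hsort hB; case: (2 ^ s)%N => [|b] alpha hnz hsort hB //.
exact: (@main_b R b alpha hB hnz hsort).
Qed.
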